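(* Let $0<\delta_0\le 1/253$ and $\lambda,\mu,R>0$. Assume Condition (C3), $\mu^2\le \delta_0R^2/(2J^2(g^0))$ (vacuous if $J(g^0)=0$), and $$\frac{4\lambda^2 s_0}{\Lambda_{\tilde X,\min}^2}\le \delta_0R^2.$$ Suppose the realized data $(X,Z,E)$ lie in $\mathcal T(\delta_0,R)$, i.e. $$\sup_{f\in\mathcal F(R)}\big|\|f\|_n^2-\|f\|^2\big|\le\delta_0R^2\quad\text{and}\quad \sup_{f\in\mathcal F(R)}\big|E^Tf(X,Z)\big|/n\le \delta_0R^2.$$ Then every minimizer $(\hat\beta,\hat g)$ of the doubly penalised least squares criterion satisfies $\tau(\hat f-f^0)\le R$.
   Context: Setting. Let $(x,z)$ be a random vector with $x\in\mathbb R^p$ (a row vector) and $z\in\mathbb R^d$, joint distribution $Q$ and marginal $Q_z$ of $z$; let $(x_i,z_i)$, $i=1,\dots,n$, be i.i.d. copies of $(x,z)$, and let $X$ be the $n\times p$ matrix with rows $x_i$. Let $\mathcal G$ be a linear subspace of $L_2(Q_z)$ equipped with a semi-inner product $J(\cdot,\cdot)$ with associated seminorm $J(\cdot)$. Fix $\beta^0\in\mathbb R^p$, $g^0\in\mathcal G$; $S_0=\{j:\beta^0_j\neq 0\}$, $s_0=|S_0|$. The responses are $Y=X\beta^0+g^0(Z)+E\in\mathbb R^n$, where $g(Z)=(g(z_1),\dots,g(z_n))^T$ and $E=(e_1,\dots,e_n)^T$. For a function $f$ of $(x,z)$: $\|f\|^2=\mathbb E f(x,z)^2$, $\|f\|_n^2=\frac1n\sum_{i=1}^n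 f(x_i,z_i)^2$. For $\beta\in\mathbb R^p$, $g\in\mathcal G$, write $f=X\beta+g$ for the function $(x,z)\mapsto x\beta+g(z)$ (and also for the vector $f(X,Z)=X\beta+g(Z)$); $f^0=X\beta^0+g^0$. Let $h(z)=\mathbb E[x\mid z]$, $\tilde x=x-h(z)$; $\Lambda_{\tilde X,\min}^2$ is the smallest eigenvalue of $\mathbb E[\tilde x^T\tilde x]$ and $\Lambda_{h,\max}^2$ the largest eigenvalue of $\mathbb E[h(z)^Th(z)]$. Condition (C3): $\Lambda_{\tilde X,\min}>0$ and $\Lambda_{h,\max}<\infty$. Estimator: $(\hat\beta,\hat g)$ minimizes over $\mathbb R^p\times\mathcal G$ the criterion $\|Y-X\beta-g(Z)\|_n^2+\lambda\|\beta\|_1+\mu^2J^2(g)$, where $\|v\|_n^2=v^Tv/n$; $\hat f=X\hat\beta+\hat g$. For a pair $(\beta,g)$ with $f=X\beta+g$: $\tau(f)=\frac{\lambda\|\beta\|_1}{R\sqrt{\delta_0/2}}+\sqrt{\|X\beta+g\|^2+\mu^2J^2(g)}$ (with $\hat f-f^0$ corresponding to $(\hat\beta-\beta^0,\hat g-g^0)$), and $\mathcal F(R)$ is the set of all $f=X\beta+g$, $\beta\in\mathbb R^p$, $g\in\mathcal G$, with $\tau(f)\le R$. *)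

(* Defs.v *)
From HB Require Import structures.
From mathcomp Require Import all_boot all_order all_algebra.
From mathcomp Require Import all_classical all_reals all_analysis.
Set Implicit Arguments. Unset Strict Implicit. Unset Printing Implicit Defensive.
Import Order.TTheory GRing.Theory Num.Theory.
Import numFieldNormedType.Exports.
Local Open Scope classical_set_scope.
Local Open Scope ring_scope.

Section PLM.
Context {dm : measure_display} {Omega : measurableType dm} {R : realType}.
Variable P : probability Omega R.

Definition sq_int (f : Omega -> R) : Prop :=
  measurable_fun setT f /\ P.-integrable setT (fun w => ((f w) ^+ 2)%:E).

Definition Exp (f : Omega -> R) : R := (\int[P]_(w in setT) f w)%R.

Context {p d : nat}.
Variables (x : Omega -> 'rV[R]_p) (z : Omega -> 'rV[R]_d).

Definition L2z (g : 'rV[R]_d -> R) : Prop := sq_int (fun w => g (z w)).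

(* h is (a version of) the conditional expectation E[x | z]:
   each coordinate h_j(z) is integrable and sigma(z)-measurable, and
   E[(x_j - h_j(z)) phi(z)] = 0 for all bounded sigma(z)-measurable phi(z). *)
Definition cond_exp (h : 'rV[R]_d -> 'rV[R]_p) : Prop :=
  forall j : 'I_p,
    measurable_fun setT (fun w => h (z w) 0 j) /\
    P.-integrable setT (fun w => (h (z w) 0 j)%:E) /\
    forall phi : 'rV[R]_d -> R,
      measurable_fun setT (fun w => phi (z w)) ->
      (exists M : R, forall v, `|phi v| <= M) ->
      Exp (fun w => (x w 0 j - h (z w) 0 j) * phi (z w)) = 0.

Definition SigmaXt (h : 'rV[R]_d -> 'rV[R]_p) : 'M[R]_p :=
  \matrix_(j, k) Exp (fun w => (x w 0 j - h (z w) 0 j) * (x w 0 k - h (z w) 0 k)).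

Definition SigmaH (h : 'rV[R]_d -> 'rV[R]_p) : 'M[R]_p :=
  \matrix_(j, k) Exp (fun w => h (z w) 0 j * h (z w) 0 k).

Definition min_eig (A : 'M[R]_p) (L : R) : Prop :=
  eigenvalue A L /\ forall a, eigenvalue A a -> L <= a.

Definition max_eig (A : 'M[R]_p) (L : R) : Prop :=
  eigenvalue A L /\ forall a, eigenvalue A a -> a <= L.

(* Condition (C3), with LX2 = Lambda_{Xtilde,min}^2 :
   Lambda_{Xtilde,min} > 0 and Lambda_{h,max} < oo (the largest eigenvalue of
   E[h^T h] exists as a real number, h(z) being square integrable). *)
Definition condC3 (h : 'rV[R]_d -> 'rV[R]_p) (LX2 : R) : Prop :=
  min_eig (SigmaXt h) LX2 /\ 0 < LX2 /\
  (forall j : 'I_p, sq_int (fun w => h (z w) 0 j)) /\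
  exists LH2 : R, max_eig (SigmaH h) LH2.

Definition semi_inner_subspace (G : set ('rV[R]_d -> R))
  (J : ('rV[R]_d -> R) -> ('rV[R]_d -> R) -> R) : Prop :=
  (forall g, G g -> L2z g) /\
  G (fun _ => 0) /\
  (forall g1 g2, G g1 -> G g2 -> G (fun v => g1 v + g2 v)) /\
  (forall (a : R) g, G g -> G (fun v => a * g v)) /\
  (forall g1 g2, G g1 -> G g2 -> J g1 g2 = J g2 g1) /\
  (forall (a : R) g1 g2 g3, G g1 -> G g2 -> G g3 ->
      J (fun v => a * g1 v + g2 v) g3 = a * J g1 g3 + J g2 g3) /\
  (forall g, G g -> 0 <= J g g).

Definition l1 (b : 'cV[R]_p) : R := \sum_(j < p) `|b j 0|.

Definition normQ2 (b : 'cV[R]_p) (g : 'rV[R]_d -> R) : R :=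
  Exp (fun w => ((\sum_(j < p) x w 0 j * b j 0) + g (z w)) ^+ 2).

Definition tau (J : ('rV[R]_d -> R) -> ('rV[R]_d -> R) -> R)
  (delta0 lambda mu Rr : R) (b : 'cV[R]_p) (g : 'rV[R]_d -> R) : R :=
  lambda * l1 b / (Rr * Num.sqrt (delta0 / 2)) +
  Num.sqrt (normQ2 b g + mu ^+ 2 * J g g).

Context {n : nat}.
Variables (X : 'M[R]_(n, p)) (Zs : 'I_n -> 'rV[R]_d) (E : 'cV[R]_n).

Definition fval (b : 'cV[R]_p) (g : 'rV[R]_d -> R) (i : 'I_n) : R :=
  (\sum_(j < p) X i j * b j 0) + g (Zs i).

Definition normn2 (b : 'cV[R]_p) (g : 'rV[R]_d -> R) : R :=
  (\sum_(i < n) fval b g i ^+ 2) / n%:R.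

Definition in_T (G : set ('rV[R]_d -> R))
  (J : ('rV[R]_d -> R) -> ('rV[R]_d -> R) -> R)
  (delta0 lambda mu Rr : R) : Prop :=
  forall (b : 'cV[R]_p) (g : 'rV[R]_d -> R), G g ->
    tau J delta0 lambda mu Rr b g <= Rr ->
    `|normn2 b g - normQ2 b g| <= delta0 * Rr ^+ 2 /\
    `|\sum_(i < n) E i 0 * fval b g i| / n%:R <= delta0 * Rr ^+ 2.

(* the penalised criterion, with Y = X beta0 + g0(Z) + E *)
Definition crit (J : ('rV[R]_d -> R) -> ('rV[R]_d -> R) -> R)
  (beta0 : 'cV[R]_p) (g0 : 'rV[R]_d -> R) (lambda mu : R)
  (b : 'cV[R]_p) (g : 'rV[R]_d -> R) : R :=
  (\sum_(i < n) (fval beta0 g0 i + E i 0 - fval b g i) ^+ 2) / n%:R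
  + lambda * l1 b + mu ^+ 2 * J g g.

Definition is_minimizer (G : set ('rV[R]_d -> R))
  (J : ('rV[R]_d -> R) -> ('rV[R]_d -> R) -> R)
  (beta0 : 'cV[R]_p) (g0 : 'rV[R]_d -> R) (lambda mu : R)
  (bh : 'cV[R]_p) (gh : 'rV[R]_d -> R) : Prop :=
  G gh /\ forall b g, G g ->
    crit J beta0 g0 lambda mu bh gh <= crit J beta0 g0 lambda mu b g.

End PLM.

Definition s0 {R : realType} {p : nat} (beta0 : 'cV[R]_p) : nat :=
  #|[pred j : 'I_p | beta0 j 0 != 0]|.

(* Main.v *)
Require Import Defs.
From HB Require Import structures.
From mathcomp Require Import all_boot all_order all_algebra.
From mathcomp Require Import all_classical all_reals all_analysis.
From mathcomp Require Import measurable_realfun.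
From mathcomp Require Import ring lra.
Import Order.TTheory GRing.Theory Num.Theory.
Import numFieldNormedType.Exports.
Local Open Scope classical_set_scope.
Local Open Scope ring_scope.
Set Implicit Arguments. Unset Strict Implicit.

Section L2.
Context {dm : measure_display} {Omega : measurableType dm} {R : realType}.
Variable P : probability Omega R.

Lemma sq_int_m f : sq_int P f -> measurable_fun setT f.
Proof. by case. Qed.

Lemma int_dom (f g : Omega -> R) : measurable_fun setT f ->
  P.-integrable setT (EFin \o g) -> (forall w, `|f w| <= `|g w|) ->
  P.-integrable setT (EFin \o f).
Proof.
move=> mf ig fg; apply: le_integrable ig => //.
  exact/measurable_EFinP.
by move=> w _ /=; rewrite lee_fin.
Qed.

Lemma int_D (f g : Omega -> R) : P.-integrable setT (EFin \o f) ->
  P.-integrable setT (EFin \o g) -> P.-integrable setT (EFin \o (fun w => f w + g w)).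
Proof.
move=> i1 i2; have := integrableD measurableT i1 i2.
by apply: eq_integrable => // w _ /=.
Qed.

Lemma int_Z (k : R) (f : Omega -> R) : P.-integrable setT (EFin \o f) ->
  P.-integrable setT (EFin \o (fun w => k * f w)).
Proof.
move=> i1; have := integrableZl measurableT k i1.
by apply: eq_integrable => // w _ /=.
Qed.

Lemma int_cst (k : R) : P.-integrable setT (EFin \o (fun _ : Omega => k)).
Proof. exact: finite_measure_integrable_cst. Qed.

Lemma sq_int_int (f : Omega -> R) : sq_int P f -> P.-integrable setT (EFin \o f).
Proof.
case=> mf i2; apply: (int_dom mf (g := fun w => 1 + f w ^+ 2)).
  by apply: int_D => //; exact: int_cst.
move=> w; rewrite [X in _ <= X]ger0_norm ?addr_ge0 ?sqr_ge0 //.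
have [h1|h1] := lerP `|f w| 1.
  by apply: le_trans h1 _; rewrite lerDl sqr_ge0.
apply: le_trans (_ : f w ^+ 2 <= _); last by rewrite lerDr.
have -> : f w ^+ 2 = `|f w| ^+ 2 by rewrite real_normK ?num_real.
nra.
Qed.

Lemma int_M (f g : Omega -> R) : sq_int P f -> sq_int P g ->
  P.-integrable setT (EFin \o (fun w => f w * g w)).
Proof.
case=> mf i1 [mg i2]; apply: (int_dom (g := fun w => f w ^+ 2 + g w ^+ 2)).
- exact: measurable_funM.
- exact: int_D.
move=> w; rewrite [X in _ <= X]ger0_norm ?addr_ge0 ?sqr_ge0 //.
rewrite normrM; have := sqrrD (`|f w|) (- `|g w|).
rewrite !sqrrN !real_normK ?num_real // => _.
have : 0 <= (`|f w| - `|g w|) ^+ 2 by rewrite sqr_ge0.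
rewrite sqrrB !real_normK ?num_real //.
nra.
Qed.

Lemma sq_int_ext (f g : Omega -> R) : (forall w, f w = g w) -> sq_int P f -> sq_int P g.
Proof. by move=> fg; have -> : g = f by apply/funext => w; rewrite fg. Qed.

Lemma sq_int_D (f g : Omega -> R) : sq_int P f -> sq_int P g ->
  sq_int P (fun w => f w + g w).
Proof.
move=> [mf i1] [mg i2]; split; first exact: measurable_funD.
apply: (int_dom (g := fun w => 2 * f w ^+ 2 + 2 * g w ^+ 2)).
- exact/measurable_funX/measurable_funD.
- by apply: int_D; apply: int_Z.
move=> w.
have hp : 0 <= 2 * f w ^+ 2 + 2 * g w ^+ 2 by rewrite addr_ge0 // mulr_ge0 // sqr_ge0.
rewrite [X in _ <= X]ger0_norm // ger0_norm ?sqr_ge0 //.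
have : 0 <= (f w - g w) ^+ 2 by rewrite sqr_ge0.
rewrite sqrrB sqrrD; nra.
Qed.

Lemma sq_int_Z (k : R) (f : Omega -> R) : sq_int P f -> sq_int P (fun w => k * f w).
Proof.
move=> [mf i1]; split.
  by apply: measurable_funM => //; exact: measurable_cst.
have := int_Z (k ^+ 2) i1; apply: eq_integrable => // w _ /=.
by rewrite exprMn.
Qed.

Lemma sq_int_cst (k : R) : sq_int P (fun _ => k).
Proof. split; [exact: measurable_cst | exact: int_cst]. Qed.

Lemma sq_int_sum (I : Type) (s : seq I) (F : I -> Omega -> R) :
  (forall i, sq_int P (F i)) -> sq_int P (fun w => \sum_(i <- s) F i w).
Proof.
move=> hF; elim: s => [|a s IH].
  by apply: (sq_int_ext (f := fun _ => 0)) => [w|]; [rewrite big_nil|exact: sq_int_cst].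
apply: (sq_int_ext (f := fun w => F a w + \sum_(i <- s) F i w)).
  by move=> w; rewrite big_cons.
exact: sq_int_D.
Qed.

Lemma Exp_D (f g : Omega -> R) : P.-integrable setT (EFin \o f) ->
  P.-integrable setT (EFin \o g) -> Exp P (fun w => f w + g w) = Exp P f + Exp P g.
Proof. by move=> i1 i2; rewrite /Exp RintegralD. Qed.

Lemma Exp_Z (k : R) (f : Omega -> R) : P.-integrable setT (EFin \o f) ->
  Exp P (fun w => k * f w) = k * Exp P f.
Proof. by move=> i1; rewrite /Exp RintegralZl. Qed.

Lemma Exp_ext (f g : Omega -> R) : (forall w, f w = g w) -> Exp P f = Exp P g.
Proof. by move=> fg; have -> : g = f by apply/funext => w; rewrite fg. Qed.

Lemma Exp_ge0 (f : Omega -> R) : (forall w, 0 <= f w) -> 0 <= Exp P f.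
Proof. by move=> f0; rewrite /Exp Rintegral_ge0. Qed.

Lemma Exp_sum (I : Type) (s : seq I) (F : I -> Omega -> R) :
  (forall i, P.-integrable setT (EFin \o F i)) ->
  Exp P (fun w => \sum_(i <- s) F i w) = \sum_(i <- s) Exp P (F i).
Proof.
move=> hF; elim: s => [|a s IH].
  rewrite big_nil (Exp_ext (g := fun _ => 0 * 0)) => [|w]; last by rewrite big_nil mulr0.
  by rewrite Exp_Z ?mul0r //; exact: int_cst.
rewrite big_cons -IH -Exp_D //; last first.
  have : P.-integrable setT (fun w => \sum_(i <- s) (EFin \o F i) w).
    exact: integrable_sum.
  by apply: eq_integrable => // w _ /=; rewrite sumEFin.
by apply: Exp_ext => w; rewrite big_cons.
Qed.

Lemma int_sum (I : Type) (s : seq I) (F : I -> Omega -> R) :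
  (forall i, P.-integrable setT (EFin \o F i)) ->
  P.-integrable setT (EFin \o (fun w => \sum_(i <- s) F i w)).
Proof.
move=> hF; have : P.-integrable setT (fun w => \sum_(i <- s) (EFin \o F i) w).
  exact: integrable_sum.
by apply: eq_integrable => // w _ /=; rewrite sumEFin.
Qed.

End L2.
Section Rayleigh.
Context {R : realType} {p : nat}.
Variable S : 'M[R]_p.
Hypothesis Ssym : forall j k, S j k = S k j.

Definition nn (v : 'rV[R]_p) := \sum_j v 0 j ^+ 2.
Definition dt (u v : 'rV[R]_p) := \sum_j u 0 j * v 0 j.
Definition bil (u v : 'rV[R]_p) := \sum_j \sum_k u 0 j * S j k * v 0 k.

Lemma bilC u v : bil u v = bil v u.
Proof.
rewrite /bil exchange_big; apply: eq_bigr => j _; apply: eq_bigr => k _.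
by rewrite Ssym; ring.
Qed.

Lemma bil_exp u w t :
  bil (u + t *: w) (u + t *: w) = bil u u + 2 * t * bil u w + t ^+ 2 * bil w w.
Proof.
have -> : 2 * t * bil u w = t * bil u w + t * bil w u.
  by rewrite (bilC w u); ring.
rewrite /bil !big_distrr -!big_split /=; apply: eq_bigr => j _.
rewrite !big_distrr -!big_split /=; apply: eq_bigr => k _.
rewrite !mxE; ring.
Qed.

Lemma nn_exp u w t :
  nn (u + t *: w) = nn u + 2 * t * dt u w + t ^+ 2 * nn w.
Proof.
rewrite /nn /dt !big_distrr -!big_split /=; apply: eq_bigr => j _.
rewrite !mxE; ring.
Qed.

Lemma bilZ a v : bil (a *: v) (a *: v) = a ^+ 2 * bil v v.
Proof.
rewrite /bil !big_distrr; apply: eq_bigr => j _.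
rewrite !big_distrr; apply: eq_bigr => k _; rewrite !mxE /=; ring.
Qed.

Lemma nnZ a v : nn (a *: v) = a ^+ 2 * nn v.
Proof.
rewrite /nn !big_distrr; apply: eq_bigr => j _; rewrite !mxE /=; ring.
Qed.

Lemma nn_ge0 v : 0 <= nn v.
Proof. by apply: sumr_ge0 => j _; rewrite sqr_ge0. Qed.

Lemma nn_eq0 v : nn v = 0 -> forall j, v 0 j = 0.
Proof.
move=> /eqP; rewrite psumr_eq0 => [/allP H j|j _]; last by rewrite sqr_ge0.
by have := H j (mem_index_enum _); rewrite /= sqrf_eq0 => /eqP.
Qed.

Lemma bil_cont : continuous (fun v : 'rV[R]_p => bil v v).
Proof.
apply: (@continuous_big _ _ +%R 0 xpredT _ _ _ (fun j (v : 'rV[R]_p) => \sum_k v 0 j * S j k * v 0 k)).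
  exact: add_continuous.
move=> j _.
apply: (@continuous_big _ _ +%R 0 xpredT _ _ _ (fun k (v : 'rV[R]_p) => v 0 j * S j k * v 0 k)).
  exact: add_continuous.
move=> k _ v.
apply: (@continuousM R _ (fun v : 'rV[R]_p => v 0 j * S j k) (fun v => v 0 k)).
  apply: (@continuousM R _ (fun v : 'rV[R]_p => v 0 j) (fun v => S j k)).
    exact: coord_continuous.
  exact: cst_continuous.
exact: coord_continuous.
Qed.

Lemma nn_cont : continuous nn.
Proof.
apply: (@continuous_big _ _ +%R 0 xpredT _ _ _ (fun j (v : 'rV[R]_p) => v 0 j ^+ 2)).
  exact: add_continuous.
move=> j _ v; rewrite /GRing.exp /=.
apply: (@continuousM R _ (fun v : 'rV[R]_p => v 0 j) (fun v => v 0 j));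
  exact: coord_continuous.
Qed.


Lemma nn1_le v j : nn v = 1 -> `|v 0 j| <= 1.
Proof.
move=> nv; have : v 0 j ^+ 2 <= 1.
  rewrite -nv /nn (bigD1 j) //= lerDl sumr_ge0 // => i _; exact: sqr_ge0.
rewrite -real_normK ?num_real // => h.
have := normr_ge0 (v 0 j); nra.
Qed.

Lemma sum_delta (F : 'I_p -> R) k : \sum_i F i * (i == k)%:R = F k.
Proof.
rewrite (bigD1 k) //= eqxx mulr1 big1 ?addr0 // => i /negbTE ->.
by rewrite mulr0.
Qed.

Lemma rayleigh (L : R) : (forall a, eigenvalue S a -> L <= a) ->
  forall v, L * nn v <= bil v v.
Proof.
move=> Lmin v.
have [p0|pgt0] := eqVneq p 0%N.
  have E0 (F : 'I_p -> R) : \sum_j F j = 0.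
    by apply: big1 => j _; have := ltn_ord j; rewrite [in X in (_ < X)%N]p0.
  by rewrite /nn /bil E0 E0 mulr0.
have {}pgt0 : (0 < p)%N by rewrite lt0n.
pose j0 := Ordinal pgt0.
pose A := [set v : 'rV[R]_p | nn v = 1].
have A0 : A !=set0.
  exists (\row_j (j == j0)%:R); rewrite /A /= /nn (bigD1 j0) //= mxE eqxx.
  rewrite big1 ?addr0 ?expr1n // => j /negbTE jj0; rewrite mxE jj0 expr0n.
  by [].
have cA : compact A.
  apply: bounded_closed_compact.
    rewrite /bounded_near; apply: filterS (nbhs_pinfty_ge (num_real (1 : R))).
    move=> M M1 u /= nu; apply: le_trans M1.
    rewrite -[X in X <= _]/(mx_norm u) mx_normrE; apply/bigmax_leP; split => // -[i j] _ /=.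
    by rewrite (ord1 i); exact: nn1_le.
  have -> : A = nn @^-1` [set x | x = 1] by [].
  apply: preimage_closed; last exact: closed_eq.
  by move=> u _; exact: nn_cont.
have [c cinA cmin] := compact_EVT_min A0 cA (continuous_subspaceT bil_cont).
have nc : nn c = 1 by move: cinA; rewrite inE.
pose m := bil c c.
have claim1 u : m * nn u <= bil u u.
  have [nu0|nu0] := eqVneq (nn u) 0.
    have u0 := nn_eq0 nu0.
    rewrite nu0 mulr0 /bil big1 // => j _; rewrite big1 // => k _.
    by rewrite u0 mul0r mul0r.
  have nupos : 0 < nn u by rewrite lt_def nu0 nn_ge0.
  pose s := Num.sqrt (nn u).
  have spos : 0 < s by rewrite sqrtr_gt0.
  have s2 : s ^+ 2 = nn u by rewrite sqr_sqrtr // nn_ge0.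
  have : m <= bil (s^-1 *: u) (s^-1 *: u).
    apply: cmin; rewrite inE /A /= nnZ -s2 exprVn mulVf //.
    by rewrite expf_neq0 // gt_eqF.
  rewrite bilZ -s2 exprVn => h.
  have s2pos : 0 < s ^+ 2 by rewrite exprn_gt0.
  apply: le_trans (ler_wpM2r (ltW s2pos) h) _.
  by rewrite mulrAC mulVf ?mul1r // gt_eqF.
have claim2 w : bil c w = m * dt c w.
  pose a := bil c w - m * dt c w.
  pose b := bil w w - m * nn w.
  have key t : 0 <= 2 * t * a + t ^+ 2 * b.
    have := claim1 (c + t *: w); rewrite bil_exp nn_exp nc /a /b -/m.
    move=> h; nra.
  apply/eqP; rewrite -subr_eq0 -/a; apply/negPn/negP => anz.
  pose k := `|b| + 1.
  have kpos : 0 < k by rewrite /k ltr_pwDr // normr_ge0.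
  have := key (- a / k).
  have bk : b <= k by rewrite /k (le_trans (ler_norm b)) // lerDl.
  have a2 : 0 < a ^+ 2 by rewrite lt_def sqr_ge0 sqrf_eq0 anz.
  move=> h.
  have : 0 <= (2 * (- a / k) * a + (- a / k) ^+ 2 * b) * k ^+ 2.
    by rewrite mulr_ge0 // sqr_ge0.
  have -> : (2 * (- a / k) * a + (- a / k) ^+ 2 * b) * k ^+ 2 = a ^+ 2 * (b - 2 * k).
    by field; rewrite gt_eqF.
  rewrite pmulr_rge0 // subr_ge0 => bk2.
  have : 2 * k <= k by apply: le_trans bk2 bk.
  by move=> h2; lra.
have eig : eigenvalue S m.
  apply/eigenvalueP; exists c.
    apply/rowP => k; rewrite !mxE.
    have := claim2 (\row_i (i == k)%:R); rewrite /bil /dt => h.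
    have e1 : \sum_j \sum_i c 0 j * S j i * (\row_i (i == k)%:R : 'rV[R]_p) 0 i
        = \sum_j c 0 j * S j k.
      apply: eq_bigr => j _; rewrite -(sum_delta (fun i => c 0 j * S j i) k).
      by apply: eq_bigr => i _; rewrite mxE.
    have e2 : \sum_j c 0 j * (\row_i (i == k)%:R : 'rV[R]_p) 0 j = c 0 k.
      rewrite -(sum_delta (fun j => c 0 j) k).
      by apply: eq_bigr => j _; rewrite mxE.
    by rewrite e1 e2 in h.
  apply/negP => /eqP c0; move: nc; rewrite c0 /nn big1 // => [/eqP|j _].
    by rewrite eq_sym oner_eq0.
  by rewrite mxE expr0n.
have Lm := Lmin _ eig.
by rewrite (le_trans (ler_wpM2r (nn_ge0 v) Lm)) // claim1.
Qed.

End Rayleigh.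
Section Orth.
Context {dm : measure_display} {Omega : measurableType dm} {R : realType}.
Variable P : probability Omega R.

Definition clamp (M a : R) := Num.max (- M) (Num.min M a).

Lemma clamp_le (M a : R) : 0 <= M -> `|clamp M a| <= M.
Proof.
move=> M0; rewrite /clamp ler_norml; apply/andP; split.
  by rewrite le_max lexx.
rewrite ge_max; apply/andP; split; first lra.
by rewrite ge_min lexx.
Qed.

Lemma clamp_abs (M a : R) : 0 <= M -> `|clamp M a| <= `|a|.
Proof.
move=> M0; have ha1 : a <= `|a| := ler_norm a.
have ha2 : - `|a| <= a by rewrite lerNl -normrN ler_norm.
have ha0 := normr_ge0 a.
rewrite /clamp ler_norml le_max ge_max le_min ge_min.
apply/andP; split; [apply/orP; right; apply/andP; split | apply/andP; split];
  try (apply/orP; right); lra.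
Qed.

Lemma clamp_id (M a : R) : `|a| <= M -> clamp M a = a.
Proof.
rewrite ler_norml => /andP[h1 h2].
apply/eqP; rewrite eq_le /clamp ge_max le_max ge_min le_min lexx h1 h2 /=.
by rewrite !orbT.
Qed.

Lemma orth_dct (xt psi : Omega -> R) : sq_int P xt -> sq_int P psi ->
  (forall n : nat, Exp P (fun w => xt w * clamp n%:R (psi w)) = 0) ->
  Exp P (fun w => xt w * psi w) = 0.
Proof.
move=> sx sp H0.
have mx := sq_int_m sx; have mp := sq_int_m sp.
have mcl (n : nat) : measurable_fun setT (fun w => clamp n%:R (psi w)).
  rewrite /clamp; apply: measurable_maxr; first exact: measurable_cst.
  by apply: measurable_minr => //; exact: measurable_cst.
pose f_ := fun (n : nat) w => (xt w * clamp n%:R (psi w))%:E.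
pose f := fun w => (xt w * psi w)%:E.
pose g := fun w => (`|xt w * psi w|)%:E.
have ip := int_M sx sp.
have mxp : measurable_fun setT (fun w => xt w * psi w) by exact: measurable_funM.
have ig : P.-integrable setT g.
  apply: (int_dom (f := fun w => `|xt w * psi w|) _ ip).
    by apply: measurableT_comp => //.
  by move=> w; rewrite normr_id.
have fg n w : `|xt w * clamp n%:R (psi w)| <= `|xt w * psi w|.
  by rewrite !normrM ler_wpM2l // clamp_abs.
have ifn n : P.-integrable setT (f_ n).
  apply: (int_dom (f := fun w => xt w * clamp n%:R (psi w)) _ ip) => //.
  exact: measurable_funM.
have f_f : {ae P, forall w, setT w -> (f_ ^~ w @ \oo --> f w)%classic}.
  apply: aeW => w _; apply: cvg_near_cst; near=> n.
  rewrite /f_ clamp_id //; near: n; exact: nbhs_infty_ger.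
have f_g : {ae P, forall w n, setT w -> (`|f_ n w| <= g w)%E}.
  by apply: aeW => w n _; rewrite /= lee_fin fg.
have [_ _] := dominated_convergence (mu := P) measurableT (f_ := f_) (f := f) (g := g)
  (fun n => measurable_int _ (ifn n)) (measurable_int _ (int_dom mxp ip (fun w => lexx _)))
  f_f ig f_g.
have Hn n : (\int[P]_(w in setT) f_ n w = 0)%E.
  have := H0 n; rewrite /Exp /Rintegral => h0.
  by rewrite -[LHS]fineK ?integrable_fin_num //; rewrite h0.
have -> : (fun n => \int[P]_(w in setT) f_ n w)%E = (fun _ => 0%E).
  by apply/funext => n; rewrite Hn.
move/cvg_lim => /(_ (@ereal_hausdorff R)) h.
by rewrite /Exp /Rintegral -h lim_cst.
Unshelve. all: by end_near.
Qed.

End Orth.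

Section Compat.
Context {dm : measure_display} {Omega : measurableType dm} {R : realType}.
Variable P : probability Omega R.
Context {p d : nat}.
Variables (x : Omega -> 'rV[R]_p) (z : Omega -> 'rV[R]_d).
Variables (h : 'rV[R]_d -> 'rV[R]_p) (LX2 : R).
Variables (G : set ('rV[R]_d -> R)) (J : ('rV[R]_d -> R) -> ('rV[R]_d -> R) -> R).
Hypothesis sx : forall j : 'I_p, sq_int P (fun w => x w 0 j).
Hypothesis ce : cond_exp P x z h.
Hypothesis sG : semi_inner_subspace P z G J.
Hypothesis C3 : condC3 P x z h LX2.

Lemma sh j : sq_int P (fun w => h (z w) 0 j).
Proof. by case: C3 => _ [_ [H _]]. Qed.

Lemma sxt j : sq_int P (fun w => x w 0 j - h (z w) 0 j).
Proof.
apply: (sq_int_ext (f := fun w => x w 0 j + (-1) * h (z w) 0 j)).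
  by move=> w; rewrite mulN1r.
by apply: sq_int_D => //; apply: sq_int_Z; exact: sh.
Qed.

Lemma clamp_meas (f : Omega -> R) (M : R) : measurable_fun setT f ->
  measurable_fun setT (fun w => clamp M (f w)).
Proof.
move=> mf; rewrite /clamp; apply: measurable_maxr; first exact: measurable_cst.
by apply: measurable_minr => //; exact: measurable_cst.
Qed.

Lemma compat (D : 'cV[R]_p) (g : 'rV[R]_d -> R) : G g ->
  LX2 * \sum_j D j 0 ^+ 2 <= normQ2 P x z D g.
Proof.
move=> Gg.
have sg : sq_int P (fun w => g (z w)) by case: sG => H _; exact: H.
pose xt j w := x w 0 j - h (z w) 0 j.
pose psi v := \sum_j h v 0 j * D j 0 + g v.
pose U w := \sum_j xt j w * D j 0.
have sU : sq_int P U.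
  apply: sq_int_sum => j; apply: (sq_int_ext (f := fun w => D j 0 * xt j w)).
    by move=> w; rewrite mulrC.
  by apply: sq_int_Z; exact: sxt.
have spsi : sq_int P (fun w => psi (z w)).
  apply: sq_int_D => //; apply: sq_int_sum => j.
  apply: (sq_int_ext (f := fun w => D j 0 * h (z w) 0 j)).
    by move=> w; rewrite mulrC.
  by apply: sq_int_Z; exact: sh.
have orth j : Exp P (fun w => xt j w * psi (z w)) = 0.
  apply: orth_dct; [exact: sxt | exact: spsi | move=> n].
  have [_ [_ H]] := ce j.
  apply: (H (fun v => clamp n%:R (psi v))).
    exact: (clamp_meas _ (sq_int_m spsi)).
  by exists n%:R => v; exact: clamp_le.
have EUpsi : Exp P (fun w => U w * psi (z w)) = 0.
  rewrite (Exp_ext P (g := fun w => \sum_j D j 0 * (xt j w * psi (z w)))); last first.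
    by move=> w; rewrite /U big_distrl; apply: eq_bigr => j _ /=; ring.
  rewrite Exp_sum; last by move=> j; apply: int_Z; apply: int_M => //; exact: sxt.
  by rewrite big1 // => j _; rewrite Exp_Z ?orth ?mulr0 //; apply: int_M => //; exact: sxt.
have -> : normQ2 P x z D g = Exp P (fun w => U w ^+ 2) +
    Exp P (fun w => 2 * (U w * psi (z w)) + psi (z w) ^+ 2).
  rewrite /normQ2 -Exp_D; last 2 first.
  - by case: sU.
  - by apply: int_D; [apply: int_Z; exact: int_M | case: spsi].
  apply: Exp_ext => w.
  have -> : \sum_j x w 0 j * D j 0 = U w + \sum_j h (z w) 0 j * D j 0.
    by rewrite /U -big_split; apply: eq_bigr => j _ /=; rewrite /xt; ring.
  by rewrite /psi; ring.
rewrite Exp_D; last 2 first.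
- by apply: int_Z; exact: int_M.
- by case: spsi.
rewrite Exp_Z ?EUpsi ?mulr0 ?add0r; last exact: int_M.
rewrite -[X in X <= _]addr0; apply: lerD; last by apply: Exp_ge0 => w; exact: sqr_ge0.
pose S := SigmaXt P x z h.
have Ssym : forall j k, S j k = S k j.
  by move=> j k; rewrite !mxE; apply: Exp_ext => w; rewrite mulrC.
have [[_ Lmin] _] := C3.
have := rayleigh Ssym Lmin (D^T).
rewrite /nn /bil.
have -> : \sum_j (D^T) 0 j ^+ 2 = \sum_j D j 0 ^+ 2 by apply: eq_bigr => j _; rewrite mxE.
move=> hr; apply: (le_trans hr); rewrite le_eqVlt; apply/orP; left; apply/eqP.
rewrite (Exp_ext P (g := fun w => \sum_j \sum_k (D j 0 * D k 0) * (xt j w * xt k w))); last first.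
  move=> w; rewrite expr2 /U big_distrl; apply: eq_bigr => j _ /=.
  by rewrite big_distrr; apply: eq_bigr => k _ /=; ring.
rewrite Exp_sum; last first.
  move=> j; apply: int_sum => k; apply: int_Z; apply: int_M; exact: sxt.
apply: eq_bigr => j _; rewrite Exp_sum; last first.
  move=> k; apply: int_Z; apply: int_M; exact: sxt.
apply: eq_bigr => k _; rewrite Exp_Z; last by apply: int_M; exact: sxt.
by rewrite !mxE; ring.
Qed.

End Compat.

Section Jlemmas.
Context {dm : measure_display} {Omega : measurableType dm} {R : realType}.
Variable P : probability Omega R.
Context {d : nat}.
Variable z : Omega -> 'rV[R]_d.
Variables (G : set ('rV[R]_d -> R)) (J : ('rV[R]_d -> R) -> ('rV[R]_d -> R) -> R).
Hypothesis sG : semi_inner_subspace P z G J.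

Lemma G0 : G (fun _ => 0).
Proof. by case: sG => _ [H _]. Qed.

Lemma GD g1 g2 : G g1 -> G g2 -> G (fun v => g1 v + g2 v).
Proof. by case: sG => _ [_ [H _]]; exact: H. Qed.

Lemma GZ (a : R) g : G g -> G (fun v => a * g v).
Proof. by case: sG => _ [_ [_ [H _]]]; exact: H. Qed.

Lemma GL (a b : R) g1 g2 : G g1 -> G g2 -> G (fun v => a * g1 v + b * g2 v).
Proof. by move=> h1 h2; apply: GD; apply: GZ. Qed.

Lemma Jsym g1 g2 : G g1 -> G g2 -> J g1 g2 = J g2 g1.
Proof. by case: sG => _ [_ [_ [_ [H _]]]]; exact: H. Qed.

Lemma Jlin (a : R) g1 g2 g3 : G g1 -> G g2 -> G g3 ->
  J (fun v => a * g1 v + g2 v) g3 = a * J g1 g3 + J g2 g3.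
Proof. by case: sG => _ [_ [_ [_ [_ [H _]]]]]; exact: H. Qed.

Lemma Jpos g : G g -> 0 <= J g g.
Proof. by case: sG => _ [_ [_ [_ [_ [_ H]]]]]; exact: H. Qed.

Lemma J0 g3 : G g3 -> J (fun _ => 0) g3 = 0.
Proof.
move=> h3; have := Jlin 1 G0 G0 h3.
have -> : (fun _ : 'rV[R]_d => 1 * 0 + 0) = (fun _ => 0 : R).
  by apply/funext => v; rewrite mulr0 addr0.
rewrite mul1r => h; lra.
Qed.

Lemma JZ (a : R) g g3 : G g -> G g3 -> J (fun v => a * g v) g3 = a * J g g3.
Proof.
move=> h h3; have := Jlin a h G0 h3; rewrite J0 // addr0.
have -> // : (fun v => a * g v + 0) = (fun v => a * g v).
by apply/funext => v; rewrite addr0.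
Qed.

Lemma JL (a b : R) g1 g2 g3 : G g1 -> G g2 -> G g3 ->
  J (fun v => a * g1 v + b * g2 v) g3 = a * J g1 g3 + b * J g2 g3.
Proof.
move=> h1 h2 h3; rewrite (Jlin a h1 (GZ b h2) h3) JZ //.
Qed.

Lemma Jquad (a b : R) g1 g2 : G g1 -> G g2 ->
  J (fun v => a * g1 v + b * g2 v) (fun v => a * g1 v + b * g2 v) =
  a ^+ 2 * J g1 g1 + 2 * a * b * J g1 g2 + b ^+ 2 * J g2 g2.
Proof.
move=> h1 h2; have hw := GL a b h1 h2.
rewrite JL // (Jsym h1 hw) (Jsym h2 hw) !JL // (Jsym h2 h1); ring.
Qed.

End Jlemmas.

Lemma num_sqd (R : realFieldType) (d s : R) : 0 < d -> d <= 1 / 253%:R ->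
  0 <= s -> s ^+ 2 = d / 2 -> 19 * d <= 2 * s.
Proof.
move=> d0 d1 s0 s2.
have h1 : 0 <= d * (2 - 361 * d) by rewrite mulr_ge0 ?ltW //; lra.
rewrite leNgt; apply/negP => h3.
have h2 : 0 < 2 * s + 19 * d by lra.
have h4 : 0 < 19 * d - 2 * s by lra.
have := mulr_gt0 h2 h4.
nra.
Qed.

Lemma num_A (R : realFieldType) (A u Q B r s d : R) :
  Q / 2 + A + B / 2 <= 9 / 2 * (d * r ^+ 2) -> u ^+ 2 = Q + B -> 0 <= u ->
  19 * d <= 2 * s -> s ^+ 2 = d / 2 -> 0 < r -> 0 < s ->
  A / (r * s) + u <= r / 2.
Proof.
move=> K u2 u0 hd s2 r0 s0.
have : A <= (r / 2 - u) * (r * s).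
  have hsq := sqr_ge0 (u - r * s).
  have hR2 := ler_wpM2l (sqr_ge0 r) hd.
  have e2 : (r * s) ^+ 2 = r ^+ 2 * (d / 2) by rewrite exprMn s2.
  nra.
rewrite -ler_pdivrMr ?mulr_gt0 //; lra.
Qed.

Lemma num_T (R : realFieldType) (r T : R) : 0 < r -> 0 <= T ->
  r / (r + T) * T <= r / 2 -> T <= r.
Proof.
move=> r0 T0; rewrite mulrAC ler_pdivrMr; last by lra.
move=> h; have : r * T <= r * r by lra.
by rewrite ler_pM2l.
Qed.

Section Main.
Context {dm : measure_display} {Omega : measurableType dm} {R : realType}.
Variable P : probability Omega R.
Context {p d n : nat}.
Variables (x : Omega -> 'rV[R]_p) (z : Omega -> 'rV[R]_d).
Variables (h : 'rV[R]_d -> 'rV[R]_p) (LX2 : R).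
Variables (G : set ('rV[R]_d -> R)) (J : ('rV[R]_d -> R) -> ('rV[R]_d -> R) -> R).
Variables (beta0 : 'cV[R]_p) (g0 : 'rV[R]_d -> R).
Variables (X : 'M[R]_(n, p)) (Zs : 'I_n -> 'rV[R]_d) (E : 'cV[R]_n).
Variables (delta0 lambda mu Rr : R) (betahat : 'cV[R]_p) (ghat : 'rV[R]_d -> R).
Hypothesis n0 : (0 < n)%N.
Hypothesis sx : forall j : 'I_p, sq_int P (fun w => x w 0 j).
Hypothesis ce : cond_exp P x z h.
Hypothesis sG : semi_inner_subspace P z G J.
Hypothesis Gg0 : G g0.
Hypothesis d0 : 0 < delta0.
Hypothesis d1 : delta0 <= 1 / 253%:R.
Hypothesis l0 : 0 < lambda.
Hypothesis m0 : 0 < mu.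
Hypothesis R0 : 0 < Rr.
Hypothesis C3 : condC3 P x z h LX2.
Hypothesis hJ0 : mu ^+ 2 * (2 * J g0 g0) <= delta0 * Rr ^+ 2.
Hypothesis hs0 : 4 * lambda ^+ 2 * (s0 beta0)%:R / LX2 <= delta0 * Rr ^+ 2.
Hypothesis inT : in_T P x z X Zs E G J delta0 lambda mu Rr.
Hypothesis minz : is_minimizer X Zs E G J beta0 g0 lambda mu betahat ghat.

Let Gh : G ghat. Proof. by case: minz. Qed.
Let dh := betahat - beta0.
Let gh := fun v => ghat v - g0 v.
Let Ggh : G gh.
Proof.
have := GL sG 1 (-1) Gh Gg0; congr G; apply/funext => v.
by rewrite /gh mul1r mulN1r.
Qed.
Let F i := fval X Zs dh gh i.
Let J00 := J g0 g0.
Let J0h := J g0 gh.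
Let Jhh := J gh gh.
Let phi s := (\sum_i (E i 0 - s * F i) ^+ 2) / n%:R
  + lambda * \sum_j `|beta0 j 0 + s * dh j 0|
  + mu ^+ 2 * (J00 + 2 * s * J0h + s ^+ 2 * Jhh).

Lemma fval_lin (b1 b2 : 'cV[R]_p) (g1 g2 : 'rV[R]_d -> R) (s : R) i :
  fval X Zs (b1 + s *: b2) (fun v => g1 v + s * g2 v) i =
  fval X Zs b1 g1 i + s * fval X Zs b2 g2 i.
Proof.
rewrite /fval.
have -> : \sum_j X i j * (b1 + s *: b2) j 0 =
    \sum_j X i j * b1 j 0 + s * \sum_j X i j * b2 j 0.
  by rewrite big_distrr -big_split; apply: eq_bigr => j _ /=; rewrite !mxE; ring.
ring.
Qed.

Lemma fval_Z (b : 'cV[R]_p) (g : 'rV[R]_d -> R) (s : R) i :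
  fval X Zs (s *: b) (fun v => s * g v) i = s * fval X Zs b g i.
Proof.
rewrite /fval mulrDr big_distrr /=; congr (_ + _).
by apply: eq_bigr => j _; rewrite !mxE; ring.
Qed.

Lemma crit_s s : crit X Zs E J beta0 g0 lambda mu (beta0 + s *: dh)
  (fun v => g0 v + s * gh v) = phi s.
Proof.
rewrite /crit /phi /l1.
have -> : (fun v => g0 v + s * gh v) = (fun v => 1 * g0 v + s * gh v).
  by apply/funext => v; rewrite mul1r.
rewrite (Jquad sG) // expr1n mul1r mulr1 -/J00 -/J0h -/Jhh.
congr (_ / _ + _ * _ + _).
  apply: eq_bigr => i _.
  rewrite (_ : (fun v => 1 * g0 v + s * gh v) = (fun v => g0 v + s * gh v)).
    by rewrite fval_lin; congr (_ ^+ 2); rewrite /F; ring.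
  by apply/funext => v; rewrite mul1r.
by apply: eq_bigr => j _; rewrite !mxE.
Qed.

Lemma phi1 : phi 1 = crit X Zs E J beta0 g0 lambda mu betahat ghat.
Proof.
rewrite -crit_s scale1r /dh addrC subrK; congr crit.
by apply/funext => v; rewrite mul1r /gh addrC subrK.
Qed.

Lemma phi0 : phi 0 = crit X Zs E J beta0 g0 lambda mu beta0 g0.
Proof.
rewrite -crit_s scale0r addr0; congr crit.
by apply/funext => v; rewrite mul0r addr0.
Qed.

Lemma phi_le : phi 1 <= phi 0.
Proof. by rewrite phi1 phi0; case: minz => _ H; exact: H. Qed.


Lemma phi_conv t : 0 <= t -> t <= 1 -> phi t <= (1 - t) * phi 0 + t * phi 1.
Proof.
move=> t0 t1.
have t1' : 0 <= 1 - t by lra.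
have hn : 0 < n%:R :> R by rewrite ltr0n.
have i1 : (\sum_i (E i 0 - t * F i) ^+ 2) / n%:R <=
    (1 - t) * ((\sum_i (E i 0 - 0 * F i) ^+ 2) / n%:R) +
    t * ((\sum_i (E i 0 - 1 * F i) ^+ 2) / n%:R).
  rewrite !mulrA -mulrDl; apply: ler_wpM2r; first by rewrite invr_ge0 ltW.
  rewrite !big_distrr -big_split /=; apply: ler_sum => i _.
  have := mulr_ge0 (mulr_ge0 t0 t1') (sqr_ge0 (F i)).
  move=> hh; nra.
have i2 : \sum_j `|beta0 j 0 + t * dh j 0| <=
    (1 - t) * \sum_j `|beta0 j 0 + 0 * dh j 0| +
    t * \sum_j `|beta0 j 0 + 1 * dh j 0|.
  rewrite !big_distrr -big_split /=; apply: ler_sum => j _.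
  have -> : beta0 j 0 + t * dh j 0 =
      (1 - t) * (beta0 j 0 + 0 * dh j 0) + t * (beta0 j 0 + 1 * dh j 0) by ring.
  apply: le_trans (ler_normD _ _) _.
  by rewrite !normrM (ger0_norm t0) (ger0_norm t1').
have i3 : J00 + 2 * t * J0h + t ^+ 2 * Jhh <=
    (1 - t) * (J00 + 2 * 0 * J0h + 0 ^+ 2 * Jhh) +
    t * (J00 + 2 * 1 * J0h + 1 ^+ 2 * Jhh).
  have := mulr_ge0 (mulr_ge0 t0 t1') (Jpos sG Ggh).
  rewrite -/Jhh => hh; nra.
have i2' := ler_wpM2l (ltW l0) i2.
have i3' := ler_wpM2l (sqr_ge0 mu) i3.
rewrite /phi; lra.
Qed.

Lemma phi_t t : 0 <= t -> t <= 1 -> phi t <= phi 0.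
Proof.
move=> t0 t1; have := phi_conv t0 t1.
have := ler_wpM2l t0 phi_le; lra.
Qed.


Lemma sq_fv (b : 'cV[R]_p) g : G g ->
  sq_int P (fun w => \sum_j x w 0 j * b j 0 + g (z w)).
Proof.
move=> Gg; apply: sq_int_D.
  apply: sq_int_sum => j; apply: (sq_int_ext (f := fun w => b j 0 * x w 0 j)).
    by move=> w; rewrite mulrC.
  exact: sq_int_Z.
by case: sG => H _; exact: H.
Qed.

Lemma normQ2_Z s (b : 'cV[R]_p) g : G g ->
  normQ2 P x z (s *: b) (fun v => s * g v) = s ^+ 2 * normQ2 P x z b g.
Proof.
move=> Gg; rewrite /normQ2 -Exp_Z; last by case: (sq_fv b Gg).
apply: Exp_ext => w; rewrite -exprMn mulrDr big_distrr /=; congr (_ ^+ 2); congr (_ + _).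
by apply: eq_bigr => j _; rewrite !mxE; ring.
Qed.

Lemma l1_Z s (b : 'cV[R]_p) : 0 <= s -> l1 (s *: b) = s * l1 b.
Proof.
move=> s0'; rewrite /l1 big_distrr; apply: eq_bigr => j _.
by rewrite mxE normrM ger0_norm.
Qed.

Lemma J_Z s g : G g -> J (fun v => s * g v) (fun v => s * g v) = s ^+ 2 * J g g.
Proof.
move=> Gg; rewrite (JZ sG s Gg (GZ sG s Gg)).
rewrite (Jsym sG Gg (GZ sG s Gg)) (JZ sG s Gg Gg); ring.
Qed.

Lemma tau_Z s : 0 <= s ->
  tau P x z J delta0 lambda mu Rr (s *: dh) (fun v => s * gh v) =
  s * tau P x z J delta0 lambda mu Rr dh gh.
Proof.
move=> s0'; rewrite /tau l1_Z // normQ2_Z // J_Z //.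
have -> : s ^+ 2 * normQ2 P x z dh gh + mu ^+ 2 * (s ^+ 2 * J gh gh) =
   s ^+ 2 * (normQ2 P x z dh gh + mu ^+ 2 * J gh gh) by ring.
rewrite (sqrtrM _ (sqr_ge0 s)) sqrtr_sqr ger0_norm //; ring.
Qed.


Lemma l1_ge0 (b : 'cV[R]_p) : 0 <= l1 b.
Proof. by apply: sumr_ge0 => j _. Qed.

Lemma main_ineq : tau P x z J delta0 lambda mu Rr dh gh <= Rr.
Proof.
set T := tau P x z J delta0 lambda mu Rr dh gh.
set sqd := Num.sqrt (delta0 / 2).
have sqd_pos : 0 < sqd by rewrite sqrtr_gt0 divr_gt0.
have sqd2 : sqd ^+ 2 = delta0 / 2 by rewrite sqr_sqrtr // divr_ge0 // ltW.
have LX2pos : 0 < LX2 by case: C3 => _ [H _].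
have T0 : 0 <= T.
  apply: addr_ge0; last exact: sqrtr_ge0.
  apply: divr_ge0; first exact: mulr_ge0 (ltW l0) (l1_ge0 _).
  exact: mulr_ge0 (ltW R0) (ltW sqd_pos).
have RT : 0 < Rr + T by apply: (lt_le_trans R0); rewrite lerDl.
pose t := Rr / (Rr + T).
have t0 : 0 < t by rewrite divr_gt0.
have t1 : t <= 1 by rewrite ler_pdivrMr // mul1r; lra.
have tT : t * T = Rr * T / (Rr + T) by rewrite /t mulrAC.
have tTR : t * T <= Rr.
  rewrite tT ler_pdivrMr //; have := mulr_ge0 (ltW R0) (ltW R0); nra.
pose Dt := t *: dh.
pose gt := fun v => t * gh v.
have Ggt : G gt := GZ sG t Ggh.
have htau : tau P x z J delta0 lambda mu Rr Dt gt = t * T := tau_Z (ltW t0).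
have tTR2 : tau P x z J delta0 lambda mu Rr Dt gt <= Rr by rewrite htau.
have [hn he] := inT Ggt tTR2.
have hc : LX2 * \sum_j Dt j 0 ^+ 2 <= normQ2 P x z Dt gt.
  by apply: (compat sx ce sG C3).
set Q := normQ2 P x z Dt gt in hn hc htau.
have Q0 : 0 <= Q by apply: Exp_ge0 => w; exact: sqr_ge0.
have FF i : fval X Zs Dt gt i = t * F i by rewrite /Dt /gt fval_Z.
have hN2 : normn2 X Zs Dt gt = (\sum_i (t * F i) ^+ 2) / n%:R.
  by rewrite /normn2; congr (_ / _); apply: eq_bigr => i _; rewrite FF.
have hE : \sum_i E i 0 * fval X Zs Dt gt i = \sum_i E i 0 * (t * F i).
  by apply: eq_bigr => i _; rewrite FF.
rewrite hN2 in hn; rewrite hE in he.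
have hphi := phi_t (ltW t0) t1.
rewrite /phi in hphi.
have hsum : \sum_i (E i 0 - t * F i) ^+ 2 = \sum_i (E i 0 - 0 * F i) ^+ 2
    - 2 * \sum_i E i 0 * (t * F i) + \sum_i (t * F i) ^+ 2.
  rewrite big_distrr -sumrB -big_split; apply: eq_bigr => i _ /=; ring.
rewrite hsum in hphi.
have Dtj j : Dt j 0 = t * dh j 0 by rewrite /Dt [in LHS]mxE.
pose C := \sum_j (if beta0 j 0 != 0 then `|Dt j 0| else 0).
have hl1 : \sum_j `|beta0 j 0 + 0 * dh j 0| + l1 Dt - 2 * C <=
    \sum_j `|beta0 j 0 + t * dh j 0|.
  rewrite /C /l1 big_distrr -big_split -sumrB; apply: ler_sum => j _ /=.
  rewrite Dtj mul0r addr0.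
  case: (eqVneq (beta0 j 0) 0) => [->|bn0] /=.
    by rewrite add0r normr0 add0r mulr0 subr0.
  have := ler_normD (beta0 j 0 + t * dh j 0) (- (t * dh j 0)).
  rewrite normrN addrK; lra.
have hag : 2 * lambda * C <= LX2 / 2 * \sum_j Dt j 0 ^+ 2
    + 2 * lambda ^+ 2 / LX2 * (s0 beta0)%:R.
  have -> : 2 * lambda ^+ 2 / LX2 * (s0 beta0)%:R =
      \sum_j (if beta0 j 0 != 0 then 2 * lambda ^+ 2 / LX2 else 0).
    rewrite -big_mkcond /=.
    rewrite (eq_bigl (fun j => j \in [pred j | beta0 j 0 != 0])) //.
    by rewrite sumr_const /s0 mulr_natr.
  rewrite /C !big_distrr -big_split /=; apply: ler_sum => j _.
  case: ifP => _; last by rewrite mulr0 addr0 mulr_ge0 // ?sqr_ge0 // divr_ge0 // ltW.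
  set ab := `|Dt j 0|.
  have -> : Dt j 0 ^+ 2 = ab ^+ 2 by rewrite /ab real_normK // num_real.
  have e : LX2 / 2 * ab ^+ 2 + 2 * lambda ^+ 2 / LX2 - 2 * lambda * ab =
      (LX2 * ab - 2 * lambda) ^+ 2 / (2 * LX2).
    by field; rewrite gt_eqF.
  have : 0 <= (LX2 * ab - 2 * lambda) ^+ 2 / (2 * LX2).
    by rewrite divr_ge0 ?sqr_ge0 // mulr_ge0 // ltW.
  rewrite -e; lra.
have hJgt : J gt gt = t ^+ 2 * Jhh by rewrite /gt J_Z.
have hJ2 : 0 <= 4 * J00 + 4 * t * J0h + t ^+ 2 * Jhh.
  have := Jpos sG (GL sG 2 t Gg0 Ggh); rewrite (Jquad sG) //.
  rewrite -/J00 -/J0h -/Jhh => hh; lra.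
have Jhh0 : 0 <= J gh gh := Jpos sG Ggh.
have hn' := hn; move: hn'; rewrite ler_norml => /andP[hn1 hn2].
have he' : (\sum_i E i 0 * (t * F i)) / n%:R <= delta0 * Rr ^+ 2.
  apply: le_trans he; apply: ler_wpM2r; first by rewrite invr_ge0 ler0n.
  exact: ler_norm.
have hl1' := ler_wpM2l (ltW l0) hl1.
have hJ2' := mulr_ge0 (sqr_ge0 mu) hJ2.
have hs0' : 2 * (2 * lambda ^+ 2 / LX2 * (s0 beta0)%:R) <= delta0 * Rr ^+ 2.
  by apply: le_trans hs0; rewrite le_eqVlt; apply/orP; left; apply/eqP; ring.
have K : Q / 2 + lambda * l1 Dt + mu ^+ 2 * (t ^+ 2 * Jhh) / 2 <=
    9 / 2 * (delta0 * Rr ^+ 2).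
  rewrite /J00 /J0h /Jhh in hphi hJ2' *.
  have hJ0c := hJ0.
  clear -hphi hn1 he' hl1' hag hc hs0' hJ2' hJ0c l0 LX2pos.
  set S0 := \sum_i (E i 0 - 0 * F i) ^+ 2 in hphi *.
  set S1 := \sum_i E i 0 * (t * F i) in hphi he' *.
  set S2 := \sum_i (t * F i) ^+ 2 in hphi hn1 *.
  set Lt := \sum_j `|beta0 j 0 + t * dh j 0| in hphi hl1' *.
  set L0 := \sum_j `|beta0 j 0 + 0 * dh j 0| in hphi hl1' *.
  set SS := \sum_j Dt j 0 ^+ 2 in hag hc *.
  set l1D := l1 Dt in hl1' *.
  set a1 := J g0 g0 in hphi hJ2' hJ0c *.
  set a2 := J g0 gh in hphi hJ2' *.
  set a3 := J gh gh in hphi hJ2' *.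
  set sz := (s0 beta0)%:R in hag hs0' *.
  clearbody S0 S1 S2 Lt L0 SS l1D a1 a2 a3 sz C Q.
  lra.
have Jt0 : 0 <= mu ^+ 2 * (t ^+ 2 * J gh gh).
  by rewrite mulr_ge0 ?sqr_ge0 // mulr_ge0 ?sqr_ge0.
have hd : 19 * delta0 <= 2 * sqd.
  by apply: num_sqd => //; exact: sqrtr_ge0.
have htauD : tau P x z J delta0 lambda mu Rr Dt gt <= Rr / 2.
  rewrite /tau -/sqd -/Q hJgt.
  apply: (num_A (Q := Q) (B := mu ^+ 2 * (t ^+ 2 * J gh gh)) (d := delta0)) => //.
  by rewrite sqr_sqrtr // addr_ge0.
apply: (num_T R0 T0).
by rewrite -htau.
Qed.


End Main.

Theorem mainTheorem3 (R : realType) (dm : measure_display)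
  (Omega : measurableType dm) (P : probability Omega R) (p d n : nat)
  (x : Omega -> 'rV[R]_p) (z : Omega -> 'rV[R]_d)
  (h : 'rV[R]_d -> 'rV[R]_p) (LX2 : R)
  (G : set ('rV[R]_d -> R))
  (J : ('rV[R]_d -> R) -> ('rV[R]_d -> R) -> R)
  (beta0 : 'cV[R]_p) (g0 : 'rV[R]_d -> R)
  (X : 'M[R]_(n, p)) (Zs : 'I_n -> 'rV[R]_d) (E : 'cV[R]_n)
  (delta0 lambda mu Rr : R)
  (betahat : 'cV[R]_p) (ghat : 'rV[R]_d -> R) :
  (0 < n)%N ->
  (forall j : 'I_p, sq_int P (fun w => x w 0 j)) ->
  cond_exp P x z h ->
  semi_inner_subspace P z G J ->
  G g0 ->
  0 < delta0 -> delta0 <= 1 / 253%:R ->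
  0 < lambda -> 0 < mu -> 0 < Rr ->
  condC3 P x z h LX2 ->
  mu ^+ 2 * (2 * J g0 g0) <= delta0 * Rr ^+ 2 ->
  4 * lambda ^+ 2 * (s0 beta0)%:R / LX2 <= delta0 * Rr ^+ 2 ->
  in_T P x z X Zs E G J delta0 lambda mu Rr ->
  is_minimizer X Zs E G J beta0 g0 lambda mu betahat ghat ->
  tau P x z J delta0 lambda mu Rr (betahat - beta0) (fun v => ghat v - g0 v)
    <= Rr.
Proof.
move=> n0 sx ce sG Gg0 d0 d1 l0 m0 R0 C3 hJ0 hs0 inT minz.
apply: main_ineq; eassumption.
Qed.
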